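(* Let $n\ge 1$, $N=2^n$ and $s=(N-1)/2$. Let $0\le j<N/2$ be an integer and let $z=W^{(N)}_j$ be the $j$-th Hadamard codeword. Then $$\hat H^{\otimes n}\,\hat U_z\,\hat H^{\otimes n}\left(\left|\tfrac12\right\rangle_s+\left|-\tfrac12\right\rangle_s\right)=\left|\tfrac12+j\right\rangle_s+\left|-\tfrac12-j\right\rangle_s .$$
   Context: Work in $\mathbb{C}^N$ with computational basis $\{|y\rangle : y=0,1,\dots,N-1\}$. The spin basis states $|m\rangle_s$, $m\in\{-s,-s+1,\dots,s\}$, are identified with computational basis states via $|m\rangle_s=|m+s\rangle$; for example $|\tfrac12\rangle_s=|N/2\rangle$ and $|-\tfrac12\rangle_s=|N/2-1\rangle$. For $x,y\in\{0,\dots,N-1\}$ let $x\cdot y\in\{0,1\}$ be the inner product modulo 2 of their $n$-bit binary expansions. $\hat H^{\otimes n}$ is the $n$-qubit Hadamard transform, $\hat H^{\otimes n}|y\rangle=N^{-1/2}\sum_{x=0}^{N-1}(-1)^{x\cdot y}|x\rangle$. For $j\in\{0,\dots,N-1\}$ the Hadamard codeword $W^{(N)}_j\in\{0,1\}^N$ is the bit string whose bit at position $x\in\{0,\dots,N-1\}$ is $x\cdot j$. For a string $z=(z_0,\dots,z_{N-1})\in\{0,1\}^N$, the oracle $\hat U_z$ is the diagonal unitary $\hat U_z|x\rangle=(-1)^{z_x}|x\rangle$. *)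

(* Defs.v *)
From mathcomp Require Import all_boot all_order all_algebra all_field.
Set Implicit Arguments. Unset Strict Implicit. Unset Printing Implicit Defensive.
Import Order.TTheory GRing.Theory Num.Theory.
Local Open Scope ring_scope.

Definition bit (k x : nat) : bool := odd (x %/ 2 ^ k).

Definition bdot (n x y : nat) : bool :=
  odd (\sum_(k < n) ((bit k x && bit k y) : nat))%N.

Definition ket (N k : nat) : 'cV[algC]_N := \col_(i < N) ((i : nat) == k)%:R.

Definition hadamard (n : nat) : 'M[algC]_(2 ^ n) :=
  \matrix_(x < 2 ^ n, y < 2 ^ n)
     ((sqrtC ((2 ^ n)%N)%:R)^-1 * (-1) ^+ bdot n x y).

Definition codeword (n j : nat) : 'I_(2 ^ n) -> bool := fun x => bdot n x j.

Definition oracle (n : nat) (z : 'I_(2 ^ n) -> bool) : 'M[algC]_(2 ^ n) :=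
  \matrix_(x < 2 ^ n, y < 2 ^ n) (if x == y then (-1) ^+ z x else 0).

Arguments codeword : clear implicits.
Arguments oracle : clear implicits.
Arguments hadamard : clear implicits.
Arguments ket : clear implicits.

(* Main.v *)
Require Import Defs.
From mathcomp Require Import all_boot all_order all_algebra all_field.
From mathcomp Require Import zify ring.
Import GRing.Theory Num.Theory.
Local Open Scope ring_scope.

Lemma bit_small k x : (x < 2 ^ k)%N -> bit k x = false.
Proof. by move=> h; rewrite /bit divn_small. Qed.

Lemma bit_addpow k m x : (k < m)%N -> bit k (x + 2 ^ m) = bit k x.
Proof.
move=> km; rewrite /bit (_ : 2 ^ m = 2 ^ (m - k) * 2 ^ k)%N; last first.
  by rewrite -expnD subnK // ltnW.
rewrite divnDMl ?expn_gt0 // oddD oddX.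
  have -> : (m - k == 0)%N = false by apply/eqP; move: km; lia.
by rewrite /= addbF.
Qed.

Lemma bit_top m x : (x < 2 ^ m)%N -> bit m (x + 2 ^ m) = true.
Proof.
move=> h; rewrite /bit -{1}(mul1n (2 ^ m)%N) divnDMl ?expn_gt0 //.
by rewrite divn_small.
Qed.

Lemma bitS k a : bit k.+1 a = bit k (a %/ 2).
Proof. by rewrite /bit expnS divnMA. Qed.

Lemma bit0 a : bit 0 a = odd a.
Proof. by rewrite /bit expn0 divn1. Qed.

Lemma bit_inj n a b : (a < 2 ^ n)%N -> (b < 2 ^ n)%N ->
  (forall k, (k < n)%N -> bit k a = bit k b) -> a = b.
Proof.
elim: n a b => [|n IH] a b ha hb H.
  by rewrite expn0 in ha hb; lia.
have h0 := H 0%N isT; rewrite !bit0 in h0.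
have hd : (a %/ 2 = b %/ 2)%N.
  apply: IH.
  - by rewrite ltn_divLR // -expnSr.
  - by rewrite ltn_divLR // -expnSr.
  by move=> k hk; rewrite -!bitS; apply: H.
by rewrite (divn_eq a 2) (divn_eq b 2) !modn2 hd h0.
Qed.

Lemma bit_compl m k j : (j < 2 ^ m)%N -> (k < m)%N ->
  bit k (2 ^ m - 1 - j) = ~~ bit k j.
Proof.
move=> hj hk; rewrite /bit.
set d := (2 ^ k)%N.
have dpos : (0 < d)%N by rewrite expn_gt0.
set E := (2 ^ (m - k))%N.
have hE : (2 ^ m = E * d)%N by rewrite -expnD subnK // ltnW.
have Eev : odd E = false.
  by rewrite /E oddX; have -> : (m - k == 0)%N = false by apply/eqP; lia.
have Epos : (0 < E)%N by rewrite expn_gt0.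
set q := (j %/ d)%N; set r := (j %% d)%N.
have hjq : j = (q * d + r)%N by rewrite /q /r -divn_eq.
have hr : (r < d)%N by rewrite ltn_mod.
have hq : (q < E)%N by rewrite /q ltn_divLR // -hE.
have -> : (2 ^ m - 1 - j = (d - 1 - r) + (E - 1 - q) * d)%N.
  rewrite hE hjq. rewrite !mulnBl mul1n.
  have : (q * d + d <= E * d)%N by rewrite -mulSnr leq_mul2r hq orbT.
  nia.
rewrite divnDMl // divn_small; last by lia.
rewrite add0n oddB; last by lia.
by rewrite oddB // Eev.
Qed.

Lemma sgn_bdot n x a : (-1) ^+ bdot n x a =
  \prod_(k < n) (-1) ^+ ((bit k x && bit k a) : nat) :> algC.
Proof. by rewrite /bdot signr_odd expr_sum. Qed.

Lemma bdotC n x y : bdot n x y = bdot n y x.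
Proof. by rewrite /bdot; congr odd; apply: eq_bigr => k _; rewrite andbC. Qed.

Lemma sum_bits n (f : nat -> bool -> algC) :
  \sum_(x < 2 ^ n) \prod_(k < n) f k (bit k x) =
  \prod_(k < n) (f k false + f k true).
Proof.
elim: n => [|n IH].
  by rewrite expn0 big_ord1 !big_ord0.
rewrite expnS mul2n -addnn big_split_ord /= big_ord_recr /= mulrDr -IH.
rewrite !mulr_suml; congr (_ + _); apply: eq_bigr => x _.
  rewrite big_ord_recr /= bit_small //; congr (_ * _).
rewrite big_ord_recr /= addnC bit_top //; congr (_ * _).
by apply: eq_bigr => k _; rewrite bit_addpow.

Qed.

Lemma factor3 (p q r : bool) :
  1 * 1 * 1 + (-1) ^+ (p : nat) * (-1) ^+ (q : nat) * (-1) ^+ (r : nat)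
  = (if p == q (+) r then 2 else 0 : algC).
Proof.
by case: p; case: q; case: r; rewrite /= ?expr0 ?expr1 ?mulN1r ?mulrN1 ?opprK ?mul1r ?mulr1 ?subrr.
Qed.

Lemma char3 n y a b :
  \sum_(x < 2 ^ n) ((-1) ^+ bdot n x y * (-1) ^+ bdot n x a * (-1) ^+ bdot n x b : algC)
  = if [forall k : 'I_n, bit k y == bit k a (+) bit k b] then (2 ^ n)%:R else 0.
Proof.
under eq_bigr => x _ do rewrite !sgn_bdot -!big_split.
rewrite (sum_bits n (fun k t => (-1) ^+ ((t && bit k y) : nat) *
   (-1) ^+ ((t && bit k a) : nat) * (-1) ^+ ((t && bit k b) : nat))) /=.
under eq_bigr => k _ do rewrite factor3.
case: forallP => [H|H].
  rewrite (eq_bigr (fun _ => 2)); last by move=> k _; rewrite H.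
  by rewrite prodr_const card_ord natrX.
have [k Hk] : exists k : 'I_n, ~~ (bit k y == bit k a (+) bit k b).
  apply/existsP; rewrite -negb_forall; apply/negP => /forallP; exact: H.
by rewrite (bigD1 k) //= (negbTE Hk) mul0r.
Qed.

Lemma mul_ket p N (A : 'M[algC]_(p, N)) k (hk : (k < N)%N) :
  A *m ket N k = \col_i A i (Ordinal hk).
Proof.
apply/matrixP => i l; rewrite !mxE (bigD1 (Ordinal hk)) //= big1 ?addr0.
  by rewrite mxE eqxx mulr1.
by move=> x hx; rewrite mxE; case: eqP => [e|]; [case/eqP: hx; apply: val_inj | rewrite mulr0].
Qed.

Lemma mul_oracle n z (v : 'cV[algC]_(2 ^ n)) :
  oracle n z *m v = \col_i ((-1) ^+ z i * v i 0).
Proof.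
apply/matrixP => i l; rewrite ord1 !mxE (bigD1 i) //= big1 ?addr0.
  by rewrite mxE eqxx.
by move=> x hx; rewrite mxE eq_sym (negbTE hx) mul0r.
Qed.

Lemma bit_zero k : bit k 0 = false.
Proof. by rewrite /bit div0n. Qed.

Lemma bits_plus m j k : (j < 2 ^ m)%N -> (k < m.+1)%N ->
  bit k (2 ^ m + j) = bit k j (+) bit k (2 ^ m).
Proof.
move=> hj hk; rewrite addnC.
have [km|] := ltnP k m.
  have := bit_addpow k m 0 km; rewrite add0n bit_zero => ->.
  by rewrite bit_addpow // addbF.
move=> mk; have -> : k = m by lia.
have := bit_top m 0; rewrite add0n expn_gt0 => -> //.
by rewrite bit_top // bit_small.
Qed.

Lemma bits_minus m j k : (j < 2 ^ m)%N -> (k < m.+1)%N ->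
  bit k (2 ^ m - 1 - j) = bit k j (+) bit k (2 ^ m - 1).
Proof.
move=> hj hk.
have [km|] := ltnP k m.
  by rewrite bit_compl // -(subn0 (2 ^ m - 1)%N) bit_compl ?expn_gt0 // bit_zero addbT.
move=> mk; have -> : k = m by lia.
have e : (0 < 2 ^ m)%N by rewrite expn_gt0.
by rewrite !bit_small //; lia.
Qed.

Lemma cond_plus m j (y : nat) : (j < 2 ^ m)%N -> (y < 2 ^ m.+1)%N ->
  [forall k : 'I_m.+1, bit k y == bit k j (+) bit k (2 ^ m)] = (y == 2 ^ m + j)%N.
Proof.
move=> hj hy; apply/forallP/eqP => [H|->].
  apply: (bit_inj m.+1) => //.
    by rewrite expnS; lia.
  by move=> k hk; rewrite bits_plus //; apply/eqP; exact: (H (Ordinal hk)).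
by move=> k; rewrite bits_plus.
Qed.

Lemma cond_minus m j (y : nat) : (j < 2 ^ m)%N -> (y < 2 ^ m.+1)%N ->
  [forall k : 'I_m.+1, bit k y == bit k j (+) bit k (2 ^ m - 1)] = (y == 2 ^ m - 1 - j)%N.
Proof.
move=> hj hy; apply/forallP/eqP => [H|->].
  apply: (bit_inj m.+1) => //.
    by rewrite expnS; lia.
  by move=> k hk; rewrite bits_minus //; apply/eqP; exact: (H (Ordinal hk)).
by move=> k; rewrite bits_minus.
Qed.

Theorem lemma1 (n j : nat) (hn : (1 <= n)%N) (hj : (j < 2 ^ n %/ 2)%N) :
  hadamard n *m oracle n (codeword n j) *m hadamard n
    *m (ket (2 ^ n)%N (2 ^ n %/ 2)%N + ket (2 ^ n)%N (2 ^ n %/ 2 - 1)%N)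
  = ket (2 ^ n)%N (2 ^ n %/ 2 + j)%N + ket (2 ^ n)%N (2 ^ n %/ 2 - 1 - j)%N.
Proof.
case: n hn hj => [//|m] _ hj.
have eM : (2 ^ m.+1 %/ 2 = 2 ^ m)%N by rewrite expnS mulKn.
rewrite eM in hj *.
have hM : (2 ^ m < 2 ^ m.+1)%N by rewrite ltn_exp2l.
have hM1 : (2 ^ m - 1 < 2 ^ m.+1)%N by lia.
rewrite -!mulmxA mulmxDr (mul_ket _ _ _ _ hM) (mul_ket _ _ _ _ hM1) mul_oracle.
apply/matrixP => y i; rewrite ord1 !mxE.
set c := (sqrtC (2 ^ m.+1)%N%:R)^-1 : algC.
have cc : c * c * (2 ^ m.+1)%N%:R = 1.
  rewrite -expr2 exprVn sqrtCK mulVf // pnatr_eq0 expn_eq0 //.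
transitivity (c * c * (
  \sum_(x < 2 ^ m.+1) ((-1) ^+ bdot m.+1 x y * (-1) ^+ bdot m.+1 x j * (-1) ^+ bdot m.+1 x (2 ^ m)%N : algC)
  + \sum_(x < 2 ^ m.+1) ((-1) ^+ bdot m.+1 x y * (-1) ^+ bdot m.+1 x j * (-1) ^+ bdot m.+1 x (2 ^ m - 1)%N : algC))).
  rewrite -big_split /= mulr_sumr; apply: eq_bigr => x _.
  rewrite !mxE /codeword (bdotC _ y x) /c; ring.
rewrite (char3 m.+1 y j (2^m)%N) (char3 m.+1 y j (2^m-1)%N) cond_plus // cond_minus //.
by case: eqP; case: eqP; rewrite ?add0r ?addr0 ?mulr0 //= ?mulrDr cc.
Qed.
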